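(* Let $n$ be a positive even integer, $Q=[-1,1]^2$, $C_n=\frac{8}{(n+2)(n+3)}$, and let $MP_n=\{(x_m,y_{m,k}) : m=1,\dots,n+1,\ k=1,\dots,\tfrac n2+1\}$ be the Morrow-Patterson points, where $x_m=\cos\frac{m\pi}{n+2}$ and $y_{m,k}=\cos\frac{2k\pi}{n+3}$ if $m$ is odd, $y_{m,k}=\cos\frac{(2k-1)\pi}{n+3}$ if $m$ is even. Then: (i) For every polynomial $p\in\mathbb{P}^2_{2n}$, $$\frac{4}{\pi^2}\int_Q p(x,y)\sqrt{1-x^2}\sqrt{1-y^2}\,dx\,dy = C_n\sum_{m=1}^{n+1}\sum_{k=1}^{\frac n2+1}(1-x_m^2)(1-y_{m,k}^2)\,p(x_m,y_{m,k}).$$ (ii) Consequently, if $\omega_{m,k}$ is defined by $\frac{1}{\omega_{m,k}}=\sum_{i=0}^n\sum_{j=0}^{n-i}U_i^2(x_m)U_j^2(y_{m,k})$, then $\omega_{m,k}=C_n(1-x_m^2)(1-y_{m,k}^2)$. (iii) The projection $\mathcal C(Q)\to\mathbb{P}^2_n$ with respect to the discrete inner product $(u,v)_\star=\frac{\pi^2}{4}\sum_{m,k}\omega_{m,k}u(x_m,y_{m,k})v(x_m,y_{m,k})$ is an interpolation operator with nodes $MP_n$: for $f\in\mathcal C(Q)$ the polynomial $$L_nf(x,y)=C_n\sum_{m=1}^{n+1}\sum_{k=1}^{\frac n2+1}(1-x_m^2)(1-y_{m,k}^2)f(x_m,y_{m,k})\sum_{i=0}^n\sum_{j=0}^{n-i}U_i(x_m)U_j(y_{m,k})U_i(x)U_j(y)$$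 satisfies $L_nf(x_m,y_{m,k})=f(x_m,y_{m,k})$ for all $m,k$. (iv) The Lebesgue function of interpolation at $MP_n$ is $$\lambda_n(x,y)=C_n\sum_{m=1}^{n+1}\sum_{k=1}^{\frac n2+1}(1-x_m^2)(1-y_{m,k}^2)\Big|\sum_{i=0}^n\sum_{j=0}^{n-i}U_i(x_m)U_j(y_{m,k})U_i(x)U_j(y)\Big|.$$
   Context: $\mathbb{P}^2_d$ is the space of real bivariate polynomials of total degree at most $d$; $\mathcal C(Q)$ is the space of continuous real functions on $Q$. $U_j$ is the Chebyshev polynomial of the second kind of degree $j$, $U_j(\cos\theta)=\frac{\sin((j+1)\theta)}{\sin\theta}$. The set $MP_n$ has $\binom{n+2}{2}=\dim\mathbb{P}^2_n$ points. The Lebesgue function of interpolation at a unisolvent node set $\{a_s\}$ for $\mathbb{P}^2_n$ is $\lambda(x,y)=\sum_s|\ell_s(x,y)|$, where $\ell_s\in\mathbb{P}^2_n$ are the Lagrange basis polynomials ($\ell_s(a_t)=\delta_{st}$). *)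

(* Defs.v *)
From Stdlib Require Import Reals Lra Lia.
From Coquelicot Require Import Coquelicot.
Open Scope R_scope.

(* Chebyshev polynomials of the second kind:
   U_0 = 1, U_1 = 2x, U_{j+2} = 2x U_{j+1} - U_j
   (equivalently U_j(cos t) = sin((j+1)t)/sin t). *)
Fixpoint Ucheb (j : nat) (x : R) : R :=
  match j with
  | O => 1
  | S j' => match j' with
            | O => 2 * x
            | S j'' => 2 * x * Ucheb j' x - Ucheb j'' x
            end
  end.

Definition poly_eval (d : nat) (c : nat -> nat -> R) (x y : R) : R :=
  sum_n_m (fun i => sum_n_m (fun j => c i j * x ^ i * y ^ j) 0 (d - i)) 0 d.

Definition inP (d : nat) (g : R -> R -> R) : Prop :=
  exists c : nat -> nat -> R, forall x y, g x y = poly_eval d c x y.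

Definition xMP (n m : nat) : R := cos (INR m * PI / INR (n + 2)).
Definition yMP (n m k : nat) : R :=
  if Nat.odd m then cos (2 * INR k * PI / INR (n + 3))
  else cos ((2 * INR k - 1) * PI / INR (n + 3)).

Definition Cn (n : nat) : R := 8 / (INR (n + 2) * INR (n + 3)).

Definition sumMP (n : nat) (g : nat -> nat -> R) : R :=
  sum_n_m (fun m => sum_n_m (fun k => g m k) 1 (n / 2 + 1)) 1 (n + 1).

Definition in_MP_range (n m k : nat) : Prop :=
  (1 <= m <= n + 1)%nat /\ (1 <= k <= n / 2 + 1)%nat.

Definition Kn (n : nat) (a b x y : R) : R :=
  sum_n_m (fun i => sum_n_m (fun j =>
     Ucheb i a * Ucheb j b * Ucheb i x * Ucheb j y) 0 (n - i)) 0 n.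

Definition omega (n m k : nat) : R :=
  / sum_n_m (fun i => sum_n_m (fun j =>
       (Ucheb i (xMP n m)) ^ 2 * (Ucheb j (yMP n m k)) ^ 2) 0 (n - i)) 0 n.

Definition dinner (n : nat) (u v : R -> R -> R) : R :=
  PI ^ 2 / 4 * sumMP n (fun m k =>
    omega n m k * u (xMP n m) (yMP n m k) * v (xMP n m) (yMP n m k)).

Definition Ln (n : nat) (f : R -> R -> R) (x y : R) : R :=
  Cn n * sumMP n (fun m k =>
    (1 - xMP n m ^ 2) * (1 - yMP n m k ^ 2) * f (xMP n m) (yMP n m k)
    * Kn n (xMP n m) (yMP n m k) x y).

Definition inQ (x y : R) : Prop := -1 <= x <= 1 /\ -1 <= y <= 1.

Definition contQ (f : R -> R -> R) : Prop :=
  forall x y, inQ x y ->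
    filterlim (fun z : R * R => f (fst z) (snd z))
      (within (fun z : R * R => inQ (fst z) (snd z)) (locally (x, y)))
      (locally (f x y)).

Definition is_lagrange (n : nat) (l : nat -> nat -> R -> R -> R) : Prop :=
  forall m k, in_MP_range n m k ->
    inP n (l m k) /\
    forall m' k', in_MP_range n m' k' ->
      l m k (xMP n m') (yMP n m' k') =
        if (Nat.eqb m m' && Nat.eqb k k')%bool then 1 else 0.

Definition lebesgue_fun (n : nat) (l : nat -> nat -> R -> R -> R) (x y : R) : R :=
  sumMP n (fun m k => Rabs (l m k x y)).

(* Main.v *)
Require Import Defs.
From Stdlib Require Import Reals Lra Lia.
From Coquelicot Require Import Coquelicot.
Open Scope R_scope.

Notation "a =R b" := (@eq R a b) (at level 70, no associativity).

Lemma sPlus (f g : nat -> R) a b :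
  sum_n_m (fun l => f l + g l) a b =R sum_n_m f a b + sum_n_m g a b.
Proof. apply (sum_n_m_plus f g). Qed.
Lemma sScalL (c : R) (f : nat -> R) a b :
  sum_n_m (fun l => c * f l) a b =R c * sum_n_m f a b.
Proof. apply (sum_n_m_mult_l c f). Qed.
Lemma sScalR (c : R) (f : nat -> R) a b :
  sum_n_m (fun l => f l * c) a b =R sum_n_m f a b * c.
Proof. apply (sum_n_m_mult_r c f). Qed.
Lemma sZero a b : sum_n_m (fun _ => 0) a b =R 0.
Proof. apply (sum_n_m_const_zero (G:=R_AbelianMonoid)). Qed.
Lemma sExt (f g : nat -> R) a b :
  (forall l, (a <= l <= b)%nat -> f l = g l) -> sum_n_m f a b =R sum_n_m g a b.
Proof. apply sum_n_m_ext_loc. Qed.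
Lemma sZeroLoc (f : nat -> R) a b :
  (forall l, (a <= l <= b)%nat -> f l = 0) -> sum_n_m f a b =R 0.
Proof. intros H. rewrite (sExt f (fun _ => 0)); auto. apply sZero. Qed.
Lemma sOpp (f : nat -> R) a b :
  sum_n_m (fun l => - f l) a b =R - sum_n_m f a b.
Proof. transitivity (sum_n_m (fun l => (-1) * f l) a b).
apply sExt; intros; ring. rewrite sScalL; ring. Qed.
Lemma sMinus (f g : nat -> R) a b :
  sum_n_m (fun l => f l - g l) a b =R sum_n_m f a b - sum_n_m g a b.
Proof. unfold Rminus. rewrite sPlus, sOpp. ring. Qed.
Lemma sEmpty (f : nat -> R) a b : (b < a)%nat -> sum_n_m f a b =R 0.
Proof. intros; apply (sum_n_m_zero f); auto. Qed.
Lemma sSm (f : nat -> R) a b : (a <= S b)%nat ->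
  sum_n_m f a (S b) =R sum_n_m f a b + f (S b).
Proof. intros; apply (sum_n_Sm f); auto. Qed.
Lemma sSn (f : nat -> R) a b : (a <= b)%nat ->
  sum_n_m f a b =R f a + sum_n_m f (S a) b.
Proof. intros; apply (sum_Sn_m f); auto. Qed.

Lemma sSwap (f : nat -> nat -> R) a b c d :
  sum_n_m (fun i => sum_n_m (fun j => f i j) c d) a b =R
  sum_n_m (fun j => sum_n_m (fun i => f i j) a b) c d.
Proof.
  induction b.
  - destruct a.
    + rewrite sum_n_n. apply sExt. intros. rewrite sum_n_n. auto.
    + rewrite (sEmpty _ (S a) 0) by lia. symmetry. apply sZeroLoc.
      intros; apply sEmpty; lia.
  - destruct (Compare_dec.le_lt_dec a (S b)).
    + rewrite sSm by lia. rewrite IHb.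
      rewrite <- sPlus. apply sExt. intros. rewrite sSm by lia. auto.
    + rewrite (sEmpty _ a (S b)) by lia. symmetry. apply sZeroLoc.
      intros; apply sEmpty; lia.
Qed.

Lemma sDelta (g : nat -> R) a b c : (a <= c <= b)%nat ->
  sum_n_m (fun l => if Nat.eqb l c then g l else 0) a b =R g c.
Proof.
  revert c. induction b; intros c Hc.
  - assert (a = 0 /\ c = 0)%nat as [-> ->] by lia. rewrite sum_n_n. reflexivity.
  - destruct (Nat.eq_dec c (S b)) as [->|Hne].
    + rewrite sSm by lia. rewrite sZeroLoc. rewrite Nat.eqb_refl. ring.
      intros l Hl. destruct (Nat.eqb_spec l (S b)); [lia|auto].
    + rewrite sSm by lia. rewrite IHb by lia.
      destruct (Nat.eqb_spec (S b) c); [lia|ring].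
Qed.

Lemma sNonneg (f : nat -> R) a b :
  (forall l, (a <= l <= b)%nat -> 0 <= f l) -> 0 <= sum_n_m f a b.
Proof.
  induction b; intros Hp.
  - destruct a. rewrite sum_n_n. apply Hp; lia. rewrite sEmpty by lia. lra.
  - destruct (Compare_dec.le_lt_dec a (S b)).
    + rewrite sSm by lia. assert (0 <= f (S b)) by (apply Hp; lia).
      destruct (Compare_dec.le_lt_dec a b).
      * assert (0 <= sum_n_m f a b) by (apply IHb; intros; apply Hp; lia). lra.
      * rewrite sEmpty by lia. lra.
    + rewrite sEmpty by lia. lra.
Qed.

Lemma sNonnegZero (f : nat -> R) a b :
  (forall l, (a <= l <= b)%nat -> 0 <= f l) -> sum_n_m f a b =R 0 ->
  forall l, (a <= l <= b)%nat -> f l = 0.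
Proof.
  induction b; intros Hp Hs l Hl.
  - assert (a = 0 /\ l = 0)%nat as [-> ->] by lia. rewrite sum_n_n in Hs. auto.
  - destruct (Compare_dec.le_lt_dec a b).
    + rewrite sSm in Hs by lia.
      assert (0 <= sum_n_m f a b).
      { apply sNonneg. intros; apply Hp; lia. }
      assert (0 <= f (S b)) by (apply Hp; lia).
      destruct (Nat.eq_dec l (S b)) as [->|]. lra.
      apply IHb; auto. intros; apply Hp; lia. lra. lia.
    + assert (l = S b) as -> by lia. assert (a = S b) as -> by lia.
      rewrite sum_n_n in Hs. auto.
Qed.

Ltac rg := try (match goal with |- @eq _ ?a ?b => change (@eq R a b) end); repeat match goal with |- context [@sum_n_m R_AbelianMonoid ?f ?a ?b] =>
  let s := fresh "s" in pose (s := (@sum_n_m R_AbelianMonoid f a b : R));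
  change (@sum_n_m R_AbelianMonoid f a b) with s; clearbody s end; first [ring | field | lra].

Definition trap (N : nat) (h : R -> R) : R :=
  /2 * h 0 + sum_n_m (fun m => h (INR m * PI / INR N)) 1 (N-1) + /2 * h PI.
Definition alt (N : nat) (h : R -> R) : R :=
  /2 * h 0 + sum_n_m (fun m => (-1)^m * h (INR m * PI / INR N)) 1 (N-1)
  + /2 * (-1)^N * h PI.

Lemma trap_ext N h g : (forall t, h t = g t) -> trap N h = trap N g.
Proof. intros H. unfold trap. rewrite (sExt _ (fun m => g (INR m * PI / INR N))).
  rewrite !H; auto. intros; auto. Qed.
Lemma alt_ext N h g : (forall t, h t = g t) -> alt N h = alt N g.
Proof. intros H. unfold alt. rewrite (sExt _ (fun m => (-1)^m * g (INR m * PI / INR N))).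
  rewrite !H; auto. intros; rewrite H; auto. Qed.
Lemma trap_plus N h g : trap N (fun t => h t + g t) = trap N h + trap N g.
Proof. unfold trap. rewrite sPlus. ring. Qed.
Lemma alt_plus N h g : alt N (fun t => h t + g t) = alt N h + alt N g.
Proof. unfold alt. rewrite (sExt _ (fun m => (-1)^m * h (INR m * PI / INR N) + (-1)^m * g (INR m * PI / INR N))).
  rewrite sPlus. ring. intros; ring. Qed.
Lemma trap_scal N c h : trap N (fun t => c * h t) = c * trap N h.
Proof. unfold trap. rewrite sScalL. ring. Qed.
Lemma alt_scal N c h : alt N (fun t => c * h t) = c * alt N h.
Proof. unfold alt. rewrite (sExt _ (fun m => c * ((-1)^m * h (INR m * PI / INR N)))).
  rewrite sScalL. ring. intros; ring. Qed.
Lemma trap_zero N : trap N (fun _ => 0) = 0.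
Proof. unfold trap. rewrite sZero. ring. Qed.
Lemma alt_zero N : alt N (fun _ => 0) = 0.
Proof. unfold alt. rewrite sZeroLoc. ring. intros; ring. Qed.

Lemma sin_nPI L : sin (INR L * PI) = 0.
Proof. induction L. simpl. rewrite Rmult_0_l. apply sin_0.
  rewrite S_INR. replace ((INR L + 1) * PI) with (INR L * PI + PI) by ring.
  rewrite neg_sin, IHL. ring. Qed.

Lemma cos_shift a m : cos (a + INR m * PI) = (-1)^m * cos a.
Proof. induction m. simpl. rewrite Rmult_0_l, Rplus_0_r. ring.
  rewrite S_INR. replace (a + (INR m + 1) * PI) with (a + INR m * PI + PI) by ring.
  rewrite neg_cos, IHm. simpl. ring. Qed.

Lemma tele x M : 2 * sin (x/2) * sum_n_m (fun m => cos (INR m * x)) 1 M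
   = sin ((INR M + /2) * x) - sin (x/2).
Proof.
  induction M.
  - rewrite sEmpty by lia. simpl. replace ((0 + /2) * x) with (x/2) by field. ring.
  - rewrite sSm by lia. rewrite Rmult_plus_distr_l, IHM. rewrite S_INR.
    replace ((INR M + 1 + /2) * x) with ((INR M + 1) * x + x/2) by field.
    replace ((INR M + /2) * x) with ((INR M + 1) * x - x/2) by field.
    rewrite sin_plus, sin_minus. ring.
Qed.

Lemma T0 N L : (1 <= N)%nat -> (L <= 2*N-1)%nat ->
  trap N (fun t => cos (INR L * t)) = if Nat.eqb L 0 then INR N else 0.
Proof.
  intros HN HL. unfold trap.
  assert (HNr : 1 <= INR N) by (apply (le_INR 1); auto).
  destruct (Nat.eqb_spec L 0) as [->|HL0].
  - rewrite (sExt _ (fun _ => 1)). rewrite sum_n_m_const.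
    replace (S (N-1) - 1)%nat with (N-1)%nat by lia. rewrite minus_INR by lia.
    simpl. rewrite !Rmult_0_l, cos_0. field.
    intros. simpl. rewrite Rmult_0_l. apply cos_0.
  - set (x := INR L * PI / INR N).
    assert (HLr : 1 <= INR L) by (apply (le_INR 1); lia).
    assert (HL2 : INR L <= 2 * INR N - 1).
    { assert (H1 : INR L <= INR (2*N-1)) by (apply le_INR; auto).
      rewrite minus_INR, mult_INR in H1 by lia. simpl in H1. lra. }
    assert (Hs : 0 < sin (x/2)).
    { assert (Hpi : 0 < PI) by apply PI_RGT_0.
      assert (Hx : x/2 = PI * (INR L / (2*INR N))) by (unfold x; field; lra).
      assert (Hq : INR L / (2*INR N) < 1).
      { apply (Rmult_lt_reg_r (2*INR N)); [lra|]. unfold Rdiv.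
        rewrite Rmult_assoc, Rinv_l; lra. }
      assert (Hq0 : 0 < INR L / (2*INR N)) by (apply Rdiv_lt_0_compat; lra).
      apply sin_gt_0; rewrite Hx. apply Rmult_lt_0_compat; lra.
      rewrite <- (Rmult_1_r PI) at 2. apply Rmult_lt_compat_l; lra. }
    rewrite (sExt _ (fun m => cos (INR m * x))).
    2:{ intros. unfold x. f_equal. field. lra. }
    apply (Rmult_eq_reg_l (2 * sin (x/2))); [|lra].
    transitivity (sin (x/2) * cos (INR L * 0) + 2 * sin (x/2) * sum_n_m (fun m => cos (INR m * x)) 1 (N-1)
      + sin (x/2) * cos (INR L * PI)). generalize (sum_n_m (fun m : nat => cos (INR m * x)) 1 (N - 1)); intro S0; lra.
    rewrite tele. rewrite minus_INR by lia. simpl INR.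
    replace ((INR N - 1 + /2) * x) with (INR L * PI - x/2).
    2:{ unfold x. field. lra. }
    rewrite sin_minus, sin_nPI, Rmult_0_r, cos_0. ring.
Qed.

Lemma T1 N L : (1 <= N)%nat -> (L <= N-1)%nat ->
  alt N (fun t => cos (INR L * t)) = 0.
Proof.
  intros HN HL.
  assert (HNr : 1 <= INR N) by (apply (le_INR 1); auto).
  transitivity (trap N (fun t => cos (INR (L + N) * t))).
  - unfold alt, trap.
    rewrite (sExt (fun m => (-1)^m * cos (INR L * (INR m * PI / INR N)))
                  (fun m => cos (INR (L + N) * (INR m * PI / INR N)))).
    2:{ intros m Hm. rewrite <- cos_shift. f_equal. rewrite plus_INR. field. lra. }
    rewrite Rmult_assoc, <- cos_shift. rewrite plus_INR, !Rmult_0_r.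
    replace (INR L * PI + INR N * PI) with ((INR L + INR N) * PI) by ring. lra.
  - rewrite T0 by lia. destruct (Nat.eqb_spec (L+N) 0); [lia|auto].
Qed.

Inductive Span1 (G : (R -> R) -> Prop) : (R -> R) -> Prop :=
| S1gen f : G f -> Span1 G f
| S1zero : Span1 G (fun _ => 0)
| S1plus f g : Span1 G f -> Span1 G g -> Span1 G (fun t => f t + g t)
| S1scal c f : Span1 G f -> Span1 G (fun t => c * f t)
| S1ext f g : Span1 G f -> (forall t, f t = g t) -> Span1 G g.

Lemma Span1_bind (G G' : (R -> R) -> Prop) h :
  (forall f, G f -> Span1 G' f) -> Span1 G h -> Span1 G' h.
Proof. intros HG HS. induction HS.
  - auto. - apply S1zero. - apply S1plus; auto. - apply S1scal; auto.
  - eapply S1ext; eauto. Qed.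

Definition CG (d : nat) (f : R -> R) : Prop :=
  exists l, (l <= d)%nat /\ forall t, f t = cos (INR l * t).

Lemma CG_mono d d' f : (d <= d')%nat -> Span1 (CG d) f -> Span1 (CG d') f.
Proof. intros Hd. apply Span1_bind. intros g [l [Hl Hg]]. apply S1gen.
  exists l; split; auto; lia. Qed.

Lemma CG_cos d h : Span1 (CG d) h -> Span1 (CG (S d)) (fun t => cos t * h t).
Proof.
  intros HS. induction HS.
  - destruct H as [l [Hl Hf]]. destruct l.
    + apply S1gen. exists 1%nat. split. lia. intros t. rewrite Hf. simpl.
      rewrite Rmult_0_l, cos_0, Rmult_1_l, Rmult_1_r. auto.
    + apply (S1ext _ (fun t => /2 * cos (INR (S (S l)) * t) + /2 * cos (INR l * t))).
      apply S1plus; apply S1scal; apply S1gen.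
      exists (S (S l)); split; auto; lia. exists l; split; auto; lia.
      intros t. rewrite Hf. rewrite !S_INR.
      replace ((INR l + 1 + 1) * t) with ((INR l + 1) * t + t) by ring.
      replace (INR l * t) with ((INR l + 1) * t - t) by ring.
      rewrite cos_plus, cos_minus. lra.
  - apply (S1ext _ (fun _ => 0)). apply S1zero. intros; ring.
  - apply (S1ext _ (fun t => cos t * f t + cos t * g t)). apply S1plus; auto.
    intros; ring.
  - apply (S1ext _ (fun t => c * (cos t * f t))). apply S1scal; auto. intros; ring.
  - apply (S1ext _ (fun t => cos t * f t)). auto. intros; rewrite H; auto.
Qed.

Lemma cospow_span i : Span1 (CG i) (fun t => cos t ^ i).
Proof.
  induction i.
  - apply S1gen. exists 0%nat. split; auto. intros; simpl. rewrite Rmult_0_l, cos_0. auto.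
  - apply (S1ext _ (fun t => cos t * cos t ^ i)). apply CG_cos; auto. intros; simpl; auto.
Qed.

Definition hh (i : nat) (t : R) : R := cos t ^ i * (1 - cos t ^ 2).

Lemma hh_span i : Span1 (CG (i+2)) (hh i).
Proof.
  apply (S1ext _ (fun t => cos t ^ i + (-1) * cos t ^ (i + 2))).
  apply S1plus. apply (CG_mono i); auto; try lia. apply cospow_span.
  apply S1scal. apply cospow_span.
  intros t. unfold hh. rewrite pow_add. ring.
Qed.

Lemma F2 d N h : Span1 (CG d) h -> (1 <= N)%nat -> (d <= N-1)%nat -> alt N h = 0.
Proof.
  intros HS HN Hd. induction HS.
  - destruct H as [l [Hl Hf]]. rewrite (alt_ext _ _ _ Hf). apply T1; auto; lia.
  - apply alt_zero.
  - rewrite alt_plus, IHHS1, IHHS2; ring.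
  - rewrite alt_scal, IHHS; ring.
  - rewrite <- (alt_ext _ _ _ H). auto.
Qed.

Lemma cos_cont l t : continuous (fun t => cos (INR l * t)) t.
Proof. apply (ex_derive_continuous (K:=R_AbsRing) (V:=R_NormedModule) (fun t => cos (INR l * t))). auto_derive. auto. Qed.

Lemma RInt_cos l : RInt (fun t => cos (INR l * t)) 0 PI = if Nat.eqb l 0 then PI else 0.
Proof.
  destruct (Nat.eqb_spec l 0) as [->|Hl].
  - rewrite (RInt_ext _ (fun _ => 1)). rewrite RInt_const. simpl. unfold scal; simpl.
    unfold mult; simpl. ring.
    intros; simpl. rewrite Rmult_0_l. apply cos_0.
  - assert (Hlr : 0 < INR l) by (apply lt_0_INR; lia).
    assert (H := is_RInt_derive (fun t => sin (INR l * t) / INR l) (fun t => cos (INR l * t)) 0 PI).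
    assert (H1 : forall x : R, Rmin 0 PI <= x <= Rmax 0 PI ->
      is_derive (fun t : R => sin (INR l * t) / INR l) x (cos (INR l * x))).
    { intros x _. auto_derive; auto. field. lra. }
    assert (H2 : forall x : R, Rmin 0 PI <= x <= Rmax 0 PI ->
      continuous (fun t : R => cos (INR l * t)) x).
    { intros x _. apply cos_cont. }
    rewrite (is_RInt_unique _ _ _ _ (H H1 H2)).
    rewrite sin_nPI, Rmult_0_r, sin_0. unfold minus, plus, opp; simpl. field. lra.
Qed.

Lemma F1 d N h : Span1 (CG d) h -> (1 <= N)%nat -> (d <= 2*N-1)%nat ->
  ex_RInt h 0 PI /\ trap N h = INR N / PI * RInt h 0 PI.
Proof.
  intros HS HN Hd. assert (Hpi : 0 < PI) by apply PI_RGT_0. induction HS.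
  - destruct H as [l [Hl Hf]]. split.
    + apply (ex_RInt_ext (fun t => cos (INR l * t))). intros; rewrite Hf; auto.
      apply (ex_RInt_continuous (V:=R_CompleteNormedModule)). intros; apply cos_cont.
    + rewrite (trap_ext _ _ _ Hf). rewrite (RInt_ext _ _ _ _ (fun x _ => Hf x)).
      rewrite RInt_cos, T0 by lia. destruct (Nat.eqb l 0). field. lra. ring.
  - split. apply ex_RInt_const. rewrite trap_zero, RInt_const.
    unfold scal; simpl; unfold mult; simpl. ring.
  - destruct IHHS1 as [E1 T1'], IHHS2 as [E2 T2']. split.
    apply (ex_RInt_plus f g); auto.
    rewrite trap_plus, T1', T2'. rewrite (RInt_plus f g) by auto.
    unfold plus; simpl. ring.
  - destruct IHHS as [E1 T1']. split. apply (ex_RInt_scal f); auto.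
    rewrite trap_scal, T1'. rewrite (RInt_scal f) by auto. unfold scal; simpl.
    unfold mult; simpl. ring.
  - destruct IHHS as [E1 T1']. split.
    apply (ex_RInt_ext f); auto.
    rewrite <- (trap_ext _ _ _ H). rewrite T1'. f_equal. apply RInt_ext. auto.
Qed.

Definition TS (N : nat) (h : R -> R) : R :=
  sum_n_m (fun l => h (INR l * PI / INR N)) 1 (N-1).
Definition AS (N : nat) (h : R -> R) : R :=
  sum_n_m (fun l => (-1)^l * h (INR l * PI / INR N)) 1 (N-1).

Lemma TS_trap N h : h 0 = 0 -> h PI = 0 -> TS N h = trap N h.
Proof. intros H0 H1. unfold TS, trap. rewrite H0, H1. rg. Qed.
Lemma AS_alt N h : h 0 = 0 -> h PI = 0 -> AS N h = alt N h.
Proof. intros H0 H1. unfold AS, alt. rewrite H0, H1. rg. Qed.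

Definition phi (n m k : nat) : R :=
  if Nat.odd m then 2 * INR k * PI / INR (n+3) else (2 * INR k - 1) * PI / INR (n+3).

Lemma yMP_phi n m k : yMP n m k = cos (phi n m k).
Proof. unfold yMP, phi. destruct (Nat.odd m); auto. Qed.

Lemma pow_m1 m : (-1)^m = if Nat.odd m then -1 else 1.
Proof. induction m. simpl. auto. simpl pow. rewrite IHm, Nat.odd_succ, <- Nat.negb_odd.
  destruct (Nat.odd m); simpl; rg. Qed.

Lemma pair_sum (G : nat -> R) K :
  sum_n_m G 1 (2*K) =R sum_n_m (fun k => G (2*k)%nat + G (2*k-1)%nat) 1 K.
Proof.
  induction K.
  - simpl. rewrite !sEmpty by lia. auto.
  - replace (2 * S K)%nat with (S (S (2*K))) by lia.
    rewrite sSm by lia. rewrite sSm by lia. rewrite IHK.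
    rewrite (sSm _ 1 K) by lia.
    replace (2 * S K)%nat with (S (S (2*K))) by lia.
    replace (S (S (2 * K)) - 1)%nat with (S (2*K)) by lia. rg.
Qed.

Lemma pair_alt (G : nat -> R) K :
  sum_n_m (fun l => (-1)^l * G l) 1 (2*K) =R sum_n_m (fun k => G (2*k)%nat - G (2*k-1)%nat) 1 K.
Proof.
  rewrite pair_sum. apply sExt. intros k Hk.
  rewrite !pow_m1. replace (2*k-1)%nat with (S (2*(k-1))) by lia.
  rewrite Nat.odd_succ, Nat.even_mul, Nat.odd_mul. simpl. ring.
Qed.

Lemma n2 n : Nat.even n = true -> n = (2 * (n/2))%nat.
Proof. intros H. apply Nat.even_spec in H. destruct H as [h ->].
  rewrite Nat.mul_comm, Nat.div_mul; lia. Qed.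

Lemma INR2k k : INR (2*k) = 2 * INR k.
Proof. rewrite mult_INR. simpl. ring. Qed.
Lemma INR2k1 k : (1 <= k)%nat -> INR (2*k-1) = 2 * INR k - 1.
Proof. intros. rewrite minus_INR by lia. rewrite INR2k. simpl. ring. Qed.

Lemma CORE n (Hev : Nat.even n = true) (a g : R -> R) :
  sumMP n (fun m k => a (INR m * PI / INR (n+2)) * g (phi n m k)) =
  /2 * TS (n+2) a * TS (n+3) g - /2 * AS (n+3) g * AS (n+2) a.
Proof.
  assert (Hn := n2 n Hev).
  remember (sum_n_m (fun k => g (2 * INR k * PI / INR (n+3))) 1 (n/2+1) : R) as E eqn:HE.
  remember (sum_n_m (fun k => g ((2 * INR k - 1) * PI / INR (n+3))) 1 (n/2+1) : R) as O eqn:HO.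
  assert (HB : (n + 3 - 1 = 2 * (n/2+1))%nat) by lia.
  assert (HTS : TS (n+3) g = E + O).
  { unfold TS. rewrite HB, pair_sum. rewrite HE, HO. rewrite <- sPlus. apply sExt.
    intros k Hk. rewrite INR2k, INR2k1 by lia. auto. }
  assert (HAS : AS (n+3) g = E - O).
  { unfold AS. rewrite HB, (pair_alt (fun l => g (INR l * PI / INR (n+3)))). rewrite HE, HO.
    rewrite <- sMinus. apply sExt.
    intros k Hk. rewrite INR2k, INR2k1 by lia. auto. }
  rewrite HTS, HAS. unfold sumMP, TS, AS.
  replace (n + 2 - 1)%nat with (n+1)%nat by lia.
  rewrite (Rmult_comm (/2 * (E - O))).
  transitivity (sum_n_m (fun m => /2*(E+O) * a (INR m * PI / INR (n + 2))
     - /2*(E-O) * ((-1)^m * a (INR m * PI / INR (n + 2)))) 1 (n+1)).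
  - apply sExt. intros m Hm.
    rewrite sScalL. rewrite pow_m1. unfold phi.
    destruct (Nat.odd m); cbv beta iota; [rewrite <- HE|rewrite <- HO]; rg.
  - rewrite sMinus, !sScalL. rg.
Qed.

Lemma Urec i x : Ucheb (S (S i)) x = 2 * x * Ucheb (S i) x - Ucheb i x.
Proof. reflexivity. Qed.

Lemma sinU i t : sin t * Ucheb i (cos t) = sin (INR (S i) * t).
Proof.
  assert (H : forall i, sin t * Ucheb i (cos t) = sin (INR (S i) * t) /\
                        sin t * Ucheb (S i) (cos t) = sin (INR (S (S i)) * t)).
  { induction i0.
    - simpl. split. rewrite Rmult_1_l, Rmult_1_r. auto.
      replace ((1+1)*t) with (t + t) by ring. rewrite sin_plus. ring.
    - destruct IHi0 as [H1 H2]. split; auto.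
      rewrite Urec. 
      transitivity (2 * cos t * (sin t * Ucheb (S i0) (cos t)) - sin t * Ucheb i0 (cos t)). ring.
      rewrite H1, H2. rewrite !S_INR.
      replace ((INR i0 + 1 + 1 + 1) * t) with ((INR i0 + 1 + 1) * t + t) by ring.
      replace ((INR i0 + 1) * t) with ((INR i0 + 1 + 1) * t - t) by ring.
      rewrite sin_plus, sin_minus. ring. }
  apply H.
Qed.

Definition xa (i i' : nat) (t : R) : R := (1 - cos t ^ 2) * Ucheb i (cos t) * Ucheb i' (cos t).
Definition dd (i i' : nat) : nat := (i - i' + (i' - i))%nat.

Lemma xa_eq i i' t : xa i i' t = /2 * cos (INR (dd i i') * t) - /2 * cos (INR (i + i' + 2) * t).
Proof.
  unfold xa. replace (1 - cos t ^ 2) with (sin t * sin t) by (rewrite <- (sin2_cos2 t); unfold Rsqr; ring).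
  transitivity ((sin t * Ucheb i (cos t)) * (sin t * Ucheb i' (cos t))). ring.
  rewrite !sinU. unfold dd.
  assert (Hc : cos (INR (i + i' + 2) * t) = cos (INR (S i) * t + INR (S i') * t)).
  { f_equal. rewrite !plus_INR, !S_INR. simpl. ring. }
  rewrite Hc, cos_plus.
  destruct (Compare_dec.le_lt_dec i' i).
  - replace (i' - i)%nat with 0%nat by lia. rewrite Nat.add_0_r.
    replace (INR (i - i') * t) with (INR (S i) * t - INR (S i') * t).
    rewrite cos_minus. field.
    rewrite minus_INR by lia. rewrite !S_INR. ring.
  - replace (i - i')%nat with 0%nat by lia. rewrite Nat.add_0_l.
    replace (INR (i' - i) * t) with (INR (S i') * t - INR (S i) * t).
    rewrite cos_minus. field.
    rewrite minus_INR by lia. rewrite !S_INR. ring.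
Qed.

Lemma cosPI2 : cos PI ^ 2 = 1.
Proof. rewrite cos_PI. ring. Qed.

Lemma xa0 i i' : xa i i' 0 = 0.
Proof. unfold xa. rewrite cos_0. ring. Qed.
Lemma xaPI i i' : xa i i' PI = 0.
Proof. unfold xa. rewrite cosPI2. ring. Qed.

Lemma TS_xa N i i' : (1 <= N)%nat -> (i + i' + 2 <= 2*N-1)%nat ->
  TS N (xa i i') = if Nat.eqb i i' then INR N / 2 else 0.
Proof.
  intros HN H. rewrite TS_trap by (apply xa0 || apply xaPI).
  rewrite (trap_ext _ _ (fun t => /2 * cos (INR (dd i i') * t) + (-/2) * cos (INR (i+i'+2) * t)))
    by (intros; rewrite xa_eq; ring).
  rewrite trap_plus.
  rewrite !trap_scal, !T0 by (unfold dd; lia).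
  destruct (Nat.eqb_spec (i+i'+2) 0); [lia|].
  unfold dd. destruct (Nat.eqb_spec i i').
  - subst. replace (i' - i' + (i' - i'))%nat with 0%nat by lia. simpl. field.
  - destruct (Nat.eqb_spec (i - i' + (i' - i)) 0); [lia|]. ring.
Qed.

Lemma AS_xa N i i' : (1 <= N)%nat -> (i + i' + 2 <= N-1)%nat -> AS N (xa i i') = 0.
Proof.
  intros HN H. rewrite AS_alt by (apply xa0 || apply xaPI).
  rewrite (alt_ext _ _ (fun t => /2 * cos (INR (dd i i') * t) + (-/2) * cos (INR (i+i'+2) * t)))
    by (intros; rewrite xa_eq; ring).
  rewrite alt_plus.
  rewrite !alt_scal, !T1 by (unfold dd; lia). ring.
Qed.

Lemma TS_hh N i : (1 <= N)%nat -> (i + 2 <= 2*N-1)%nat ->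
  TS N (hh i) = INR N / PI * RInt (hh i) 0 PI.
Proof.
  intros HN H. rewrite TS_trap. apply (F1 (i+2)); auto. apply hh_span.
  unfold hh. rewrite cos_0. ring. unfold hh. rewrite cosPI2. ring.
Qed.

Lemma AS_hh N i : (1 <= N)%nat -> (i + 2 <= N-1)%nat -> AS N (hh i) = 0.
Proof.
  intros HN H. rewrite AS_alt. apply (F2 (i+2)); auto. apply hh_span.
  unfold hh. rewrite cos_0. ring. unfold hh. rewrite cosPI2. ring.
Qed.

Definition SB (n : nat) (F : nat -> nat -> R) : R :=
  sum_n_m (fun i => sum_n_m (fun j => F i j) 0 (n - i)) 0 n.

Lemma SN_ext n F G : (forall m k, in_MP_range n m k -> F m k = G m k) -> sumMP n F = sumMP n G.
Proof. intros H. unfold sumMP. apply sExt. intros m Hm. apply sExt. intros k Hk.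
  apply H. split; lia. Qed.
Lemma SN_scal n c F : sumMP n (fun m k => c * F m k) = c * sumMP n F.
Proof. unfold sumMP. rewrite <- sScalL. apply sExt. intros. apply sScalL. Qed.
Lemma SN_plus n F G : sumMP n (fun m k => F m k + G m k) = sumMP n F + sumMP n G.
Proof. unfold sumMP. rewrite <- sPlus. apply sExt. intros. apply sPlus. Qed.
Lemma SB_ext n F G : (forall i j, (i + j <= n)%nat -> F i j = G i j) -> SB n F = SB n G.
Proof. intros H. unfold SB. apply sExt. intros i Hi. apply sExt. intros j Hj.
  apply H. lia. Qed.
Lemma SB_scal n c F : SB n (fun i j => c * F i j) = c * SB n F.
Proof. unfold SB. rewrite <- sScalL. apply sExt. intros. apply sScalL. Qed.
Lemma SB_plus n F G : SB n (fun i j => F i j + G i j) = SB n F + SB n G.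
Proof. unfold SB. rewrite <- sPlus. apply sExt. intros. apply sPlus. Qed.

Lemma SB_SN d n F :
  SB d (fun i j => sumMP n (fun m k => F i j m k)) = sumMP n (fun m k => SB d (fun i j => F i j m k)).
Proof.
  unfold SB, sumMP.
  rewrite (sExt _ (fun i => sum_n_m (fun m => sum_n_m (fun j => sum_n_m (fun k => F i j m k) 1 (n/2+1)) 0 (d-i)) 1 (n+1))).
  2:{ intros. apply sSwap. }
  rewrite sSwap. apply sExt. intros m Hm.
  rewrite (sExt _ (fun i => sum_n_m (fun k => sum_n_m (fun j => F i j m k) 0 (d-i)) 1 (n/2+1))).
  2:{ intros. apply sSwap. }
  apply sSwap.
Qed.

Lemma SB_delta n i0 j0 (f : nat -> nat -> R) : (i0 + j0 <= n)%nat ->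
  SB n (fun i j => if (Nat.eqb i i0 && Nat.eqb j j0)%bool then f i j else 0) = f i0 j0.
Proof.
  intros H. unfold SB.
  rewrite (sExt _ (fun i => if Nat.eqb i i0 then sum_n_m (fun j => if Nat.eqb j j0 then f i j else 0) 0 (n - i) else 0)).
  - rewrite sDelta by lia. apply sDelta. lia.
  - intros i Hi. destruct (Nat.eqb i i0); simpl. auto. apply sZero.
Qed.

Lemma SN_delta n m0 k0 (f : nat -> nat -> R) : in_MP_range n m0 k0 ->
  sumMP n (fun m k => if (Nat.eqb m0 m && Nat.eqb k0 k)%bool then f m k else 0) = f m0 k0.
Proof.
  intros [H1 H2]. unfold sumMP.
  rewrite (sExt _ (fun m => if Nat.eqb m m0 then sum_n_m (fun k => if Nat.eqb k k0 then f m k else 0) 1 (n/2+1) else 0)).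
  - rewrite sDelta by lia. apply sDelta. lia.
  - intros m Hm. rewrite Nat.eqb_sym. destruct (Nat.eqb m m0); simpl.
    apply sExt. intros. rewrite Nat.eqb_sym. auto. apply sZero.
Qed.

Lemma SN_count n : sumMP n (fun _ _ => 1) = INR (n+1) * INR (n/2+1).
Proof.
  unfold sumMP. rewrite (sExt _ (fun _ => INR (n/2+1))).
  rewrite sum_n_m_const. replace (S (n+1) - 1)%nat with (n+1)%nat by lia. ring.
  intros. rewrite sum_n_m_const. replace (S (n/2+1) - 1)%nat with (n/2+1)%nat by lia. ring.
Qed.

Lemma SB_count n : SB n (fun _ _ => 1) = INR (n+1) * INR (n+2) / 2.
Proof.
  unfold SB. rewrite (sExt _ (fun i => INR (S (n - i)))).
  2:{ intros. rewrite sum_n_m_const. replace (S (n-l) - 0)%nat with (S (n-l)) by lia. ring. }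
  assert (forall M, (M <= n)%nat -> sum_n_m (fun i => INR (S (n - i))) 0 M =
     INR (M+1) * INR (n+1) - INR M * INR (M+1) / 2).
  { induction M; intros HM.
    - rewrite sum_n_n. rewrite Nat.sub_0_r. rewrite !plus_INR, S_INR. simpl. field.
    - rewrite sSm by lia. rewrite IHM by lia. replace (S (n - S M)) with (n - M)%nat by lia.
      rewrite minus_INR by lia. rewrite !plus_INR, !S_INR. simpl. field. }
  rewrite H by lia. rewrite !plus_INR. simpl. field.
Qed.

Definition W n m k := Cn n * (1 - xMP n m ^ 2) * (1 - yMP n m k ^ 2).

Lemma xMP_cos n m : xMP n m = cos (INR m * PI / INR (n+2)).
Proof. reflexivity. Qed.

Lemma INRpos k : (1 <= k)%nat -> 0 < INR k.
Proof. intros; apply lt_0_INR; lia. Qed.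

Lemma DO n (Hev : Nat.even n = true) i j i' j' : (i + j <= n)%nat -> (i' + j' <= n)%nat ->
  sumMP n (fun m k => W n m k * (Ucheb i (xMP n m) * Ucheb j (yMP n m k))
                      * (Ucheb i' (xMP n m) * Ucheb j' (yMP n m k)))
  = if (Nat.eqb i i' && Nat.eqb j j')%bool then 1 else 0.
Proof.
  intros H1 H2.
  rewrite (SN_ext _ _ (fun m k => Cn n * (xa i i' (INR m * PI / INR (n+2)) * xa j j' (phi n m k)))).
  2:{ intros m k _. unfold W, xa. rewrite yMP_phi, xMP_cos. ring. }
  rewrite SN_scal, CORE by auto.
  rewrite TS_xa, TS_xa by lia.
  assert (Hz : AS (n+3) (xa j j') * AS (n+2) (xa i i') = 0).
  { destruct (Compare_dec.le_lt_dec (j + j') n).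
    - rewrite (AS_xa (n+3)) by lia. ring.
    - rewrite (AS_xa (n+2) i i') by lia. ring. }
  unfold Cn. assert (0 < INR (n+2)) by (apply INRpos; lia).
  assert (0 < INR (n+3)) by (apply INRpos; lia).
  rewrite (Rmult_assoc (/2) (AS (n+3) (xa j j'))), Hz.
  destruct (Nat.eqb i i'), (Nat.eqb j j'); simpl; field; lra.
Qed.

Lemma CUB n (Hev : Nat.even n = true) i j : (i + j <= 2*n)%nat ->
  Cn n * sumMP n (fun m k => (1 - xMP n m ^ 2) * (1 - yMP n m k ^ 2) * (xMP n m ^ i * yMP n m k ^ j))
  = 4 / PI^2 * (RInt (hh i) 0 PI * RInt (hh j) 0 PI).
Proof.
  intros H.
  rewrite (SN_ext _ _ (fun m k => hh i (INR m * PI / INR (n+2)) * hh j (phi n m k))).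
  2:{ intros m k _. unfold hh. rewrite yMP_phi, xMP_cos. ring. }
  rewrite CORE by auto.
  rewrite TS_hh, TS_hh by lia.
  assert (Hz : AS (n+3) (hh j) * AS (n+2) (hh i) = 0).
  { destruct (Compare_dec.le_lt_dec j n).
    - rewrite (AS_hh (n+3)) by lia. ring.
    - rewrite (AS_hh (n+2) i) by lia. ring. }
  unfold Cn. assert (0 < INR (n+2)) by (apply INRpos; lia).
  assert (0 < INR (n+3)) by (apply INRpos; lia).
  assert (0 < PI) by apply PI_RGT_0.
  rewrite (Rmult_assoc (/2) (AS (n+3) (hh j))), Hz. field. lra.
Qed.

Inductive Span2 (G : (R -> R -> R) -> Prop) : (R -> R -> R) -> Prop :=
| S2gen f : G f -> Span2 G f
| S2zero : Span2 G (fun _ _ => 0)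
| S2plus f g : Span2 G f -> Span2 G g -> Span2 G (fun x y => f x y + g x y)
| S2scal c f : Span2 G f -> Span2 G (fun x y => c * f x y)
| S2ext f g : Span2 G f -> (forall x y, f x y = g x y) -> Span2 G g.

Lemma Span2_bind (G G' : (R -> R -> R) -> Prop) h :
  (forall f, G f -> Span2 G' f) -> Span2 G h -> Span2 G' h.
Proof. intros HG HS. induction HS.
  - auto. - apply S2zero. - apply S2plus; auto. - apply S2scal; auto.
  - eapply S2ext; eauto. Qed.

Lemma Span2_sum G (F : nat -> R -> R -> R) a b :
  (forall l, (a <= l <= b)%nat -> Span2 G (F l)) ->
  Span2 G (fun x y => sum_n_m (fun l => F l x y) a b).
Proof.
  induction b; intros H.
  - destruct a.
    + apply (S2ext _ (F 0%nat)). apply H; lia. intros; rewrite sum_n_n; auto.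
    + apply (S2ext _ (fun _ _ => 0)). apply S2zero. intros; rewrite sEmpty; auto; lia.
  - destruct (Compare_dec.le_lt_dec a (S b)).
    + apply (S2ext _ (fun x y => sum_n_m (fun l => F l x y) a b + F (S b) x y)).
      apply S2plus. apply IHb. intros; apply H; lia. apply H; lia.
      intros. rewrite sSm by lia. auto.
    + apply (S2ext _ (fun _ _ => 0)). apply S2zero. intros; rewrite sEmpty; auto; lia.
Qed.

Lemma Span2_SB G n (F : nat -> nat -> R -> R -> R) :
  (forall i j, (i + j <= n)%nat -> Span2 G (F i j)) ->
  Span2 G (fun x y => SB n (fun i j => F i j x y)).
Proof.
  intros H. unfold SB. apply (Span2_sum G (fun i x y => sum_n_m (fun j => F i j x y) 0 (n - i))).
  intros i Hi. apply (Span2_sum G (fun j x y => F i j x y)). intros j Hj. apply H. lia.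
Qed.

Lemma Span1_mulx (G G' : (R -> R) -> Prop) h :
  (forall g, G g -> Span1 G' (fun x => x * g x)) -> Span1 G h -> Span1 G' (fun x => x * h x).
Proof.
  intros HG HS. induction HS.
  - auto.
  - apply (S1ext _ (fun _ => 0)). apply S1zero. intros; ring.
  - apply (S1ext _ (fun x => x * f x + x * g x)). apply S1plus; auto. intros; ring.
  - apply (S1ext _ (fun x => c * (x * f x))). apply S1scal; auto. intros; ring.
  - apply (S1ext _ (fun x => x * f x)). auto. intros; rewrite H; auto.
Qed.

Lemma Span_prod (G1 G2 : (R -> R) -> Prop) (G : (R -> R -> R) -> Prop) g h :
  (forall g0 h0, G1 g0 -> G2 h0 -> Span2 G (fun x y => g0 x * h0 y)) ->
  Span1 G1 g -> Span1 G2 h -> Span2 G (fun x y => g x * h y).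
Proof.
  intros HG Hg Hh. induction Hg.
  - induction Hh.
    + auto.
    + apply (S2ext _ (fun _ _ => 0)). apply S2zero. intros; ring.
    + apply (S2ext _ (fun x y => f x * f0 y + f x * g y)). apply S2plus; auto. intros; ring.
    + apply (S2ext _ (fun x y => c * (f x * f0 y))). apply S2scal; auto. intros; ring.
    + apply (S2ext _ (fun x y => f x * f0 y)). auto. intros; rewrite H0; auto.
  - apply (S2ext _ (fun _ _ => 0)). apply S2zero. intros; ring.
  - apply (S2ext _ (fun x y => f x * h y + g x * h y)). apply S2plus; auto. intros; ring.
  - apply (S2ext _ (fun x y => c * (f x * h y))). apply S2scal; auto. intros; ring.
  - apply (S2ext _ (fun x y => f x * h y)). auto. intros; rewrite H; auto.
Qed.

Definition UG (d : nat) (g : R -> R) : Prop :=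
  exists l, (l <= d)%nat /\ forall x, g x = Ucheb l x.
Definition MG (d : nat) (g : R -> R) : Prop :=
  exists p, (p <= d)%nat /\ forall x, g x = x ^ p.
Definition BG (n : nat) (f : R -> R -> R) : Prop :=
  exists i j, (i + j <= n)%nat /\ forall x y, f x y = Ucheb i x * Ucheb j y.
Definition MG2 (n : nat) (f : R -> R -> R) : Prop :=
  exists p q, (p + q <= n)%nat /\ forall x y, f x y = x ^ p * y ^ q.

Lemma UG_mono d d' g : (d <= d')%nat -> Span1 (UG d) g -> Span1 (UG d') g.
Proof. intros Hd. apply Span1_bind. intros f [l [Hl Hf]]. apply S1gen.
  exists l; split; auto; lia. Qed.
Lemma MG_mono d d' g : (d <= d')%nat -> Span1 (MG d) g -> Span1 (MG d') g.
Proof. intros Hd. apply Span1_bind. intros f [l [Hl Hf]]. apply S1gen.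
  exists l; split; auto; lia. Qed.

Lemma UG_mulx d h : Span1 (UG d) h -> Span1 (UG (S d)) (fun x => x * h x).
Proof.
  apply Span1_mulx. intros g [l [Hl Hg]]. destruct l.
  - apply (S1ext _ (fun x => /2 * Ucheb 1 x)). apply S1scal, S1gen. exists 1%nat; split; auto; lia.
    intros x. rewrite Hg. simpl. field.
  - apply (S1ext _ (fun x => /2 * Ucheb (S (S l)) x + /2 * Ucheb l x)).
    apply S1plus; apply S1scal; apply S1gen.
    exists (S (S l)); split; auto; lia. exists l; split; auto; lia.
    intros x. rewrite Hg, Urec. field.
Qed.

Lemma MG_mulx d h : Span1 (MG d) h -> Span1 (MG (S d)) (fun x => x * h x).
Proof.
  apply Span1_mulx. intros g [p [Hp Hg]]. apply S1gen. exists (S p). split. lia.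
  intros x. rewrite Hg. simpl. auto.
Qed.

Lemma pow_UG p : Span1 (UG p) (fun x => x ^ p).
Proof.
  induction p.
  - apply S1gen. exists 0%nat. split; auto.
  - apply (S1ext _ (fun x => x * x ^ p)). apply UG_mulx; auto. intros; simpl; auto.
Qed.

Lemma U_MG i : Span1 (MG i) (Ucheb i).
Proof.
  assert (H : forall i, Span1 (MG i) (Ucheb i) /\ Span1 (MG (S i)) (Ucheb (S i))).
  { induction i0.
    - split. apply S1gen. exists 0%nat. split; auto.
      apply (S1ext _ (fun x => 2 * x ^ 1)). apply S1scal, S1gen. exists 1%nat; split; auto.
      intros; simpl; ring.
    - destruct IHi0 as [H1 H2]. split; auto.
      apply (S1ext _ (fun x => 2 * (x * Ucheb (S i0) x) + (-1) * Ucheb i0 x)).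
      apply S1plus. apply S1scal. apply MG_mulx; auto.
      apply S1scal. apply (MG_mono i0); auto; lia.
      intros x. rewrite Urec. ring. }
  apply H.
Qed.

Lemma MG2_BG n f : MG2 n f -> Span2 (BG n) f.
Proof.
  intros [p [q [Hpq Hf]]].
  apply (S2ext _ (fun x y => x ^ p * y ^ q)); [|intros; rewrite Hf; auto].
  apply (Span_prod (UG p) (UG q)); try apply pow_UG.
  intros g0 h0 [i [Hi Hg]] [j [Hj Hh]]. apply S2gen. exists i, j. split. lia.
  intros. rewrite Hg, Hh. auto.
Qed.

Lemma BG_MG2 n f : BG n f -> Span2 (MG2 n) f.
Proof.
  intros [i [j [Hij Hf]]].
  apply (S2ext _ (fun x y => Ucheb i x * Ucheb j y)); [|intros; rewrite Hf; auto].
  apply (Span_prod (MG i) (MG j)); try apply U_MG.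
  intros g0 h0 [p [Hp Hg]] [q [Hq Hh]]. apply S2gen. exists p, q. split. lia.
  intros. rewrite Hg, Hh. auto.
Qed.

Lemma poly_eval_SB n c x y : poly_eval n c x y = SB n (fun i j => c i j * x ^ i * y ^ j).
Proof. reflexivity. Qed.

Lemma inP_BG n q : inP n q -> Span2 (BG n) q.
Proof.
  intros [c Hc]. apply (S2ext _ (fun x y => SB n (fun i j => c i j * (x ^ i * y ^ j)))).
  - apply Span2_SB. intros i j Hij. apply S2scal. apply MG2_BG. exists i, j. split; auto.
  - intros. rewrite Hc, poly_eval_SB. apply SB_ext. intros; ring.
Qed.

Lemma MG2_inP n f : Span2 (MG2 n) f -> inP n f.
Proof.
  intros HS. induction HS.
  - destruct H as [p [q [Hpq Hf]]].
    exists (fun a b => if (Nat.eqb a p && Nat.eqb b q)%bool then 1 else 0).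
    intros x y. rewrite poly_eval_SB, Hf.
    rewrite (SB_ext _ _ (fun a b => if (Nat.eqb a p && Nat.eqb b q)%bool then x ^ a * y ^ b else 0)).
    rewrite SB_delta; auto.
    intros a b _. destruct (Nat.eqb a p && Nat.eqb b q)%bool; ring.
  - exists (fun _ _ => 0). intros x y. rewrite poly_eval_SB.
    rewrite (SB_ext _ _ (fun i j => 0 * 1)). rewrite SB_scal. ring. intros; ring.
  - destruct IHHS1 as [c1 H1], IHHS2 as [c2 H2]. exists (fun a b => c1 a b + c2 a b).
    intros x y. rewrite H1, H2, !poly_eval_SB, <- SB_plus. apply SB_ext. intros; ring.
  - destruct IHHS as [c1 H1]. exists (fun a b => c * c1 a b).
    intros x y. rewrite H1, !poly_eval_SB, <- SB_scal. apply SB_ext. intros; ring.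
  - destruct IHHS as [c1 H1]. exists c1. intros x y. rewrite <- H. auto.
Qed.

Lemma BG_inP n f : Span2 (BG n) f -> inP n f.
Proof. intros H. apply MG2_inP. apply (Span2_bind (BG n)); auto. apply BG_MG2. Qed.

Lemma Kn_SB n a b x y : Kn n a b x y = SB n (fun i j => Ucheb i a * Ucheb j b * Ucheb i x * Ucheb j y).
Proof. reflexivity. Qed.

Lemma Kn_BG n a b : Span2 (BG n) (fun x y => Kn n a b x y).
Proof.
  apply (S2ext _ (fun x y => SB n (fun i j => (Ucheb i a * Ucheb j b) * (Ucheb i x * Ucheb j y)))).
  - apply Span2_SB. intros i j Hij. apply S2scal. apply S2gen. exists i, j. split; auto.
  - intros. rewrite Kn_SB. apply SB_ext. intros; ring.
Qed.

Lemma Kn_sym n a b c d : Kn n a b c d = Kn n c d a b.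
Proof. rewrite !Kn_SB. apply SB_ext. intros; ring. Qed.

Lemma SN_zero n : sumMP n (fun _ _ => 0) = 0.
Proof. unfold sumMP. rewrite sZeroLoc; auto. intros; apply sZero. Qed.

Lemma REP n (Hev : Nat.even n = true) r : Span2 (BG n) r -> forall x y,
  sumMP n (fun m k => W n m k * r (xMP n m) (yMP n m k) * Kn n (xMP n m) (yMP n m k) x y) = r x y.
Proof.
  intros HS. induction HS; intros x y.
  - destruct H as [i0 [j0 [Hij Hf]]].
    rewrite (SN_ext _ _ (fun m k => SB n (fun i j => (Ucheb i x * Ucheb j y) *
        (W n m k * (Ucheb i0 (xMP n m) * Ucheb j0 (yMP n m k)) * (Ucheb i (xMP n m) * Ucheb j (yMP n m k)))))).
    2:{ intros m k _. rewrite Kn_SB, <- SB_scal. apply SB_ext. intros. rewrite Hf. ring. }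
    rewrite <- SB_SN.
    rewrite (SB_ext _ _ (fun i j => if (Nat.eqb i i0 && Nat.eqb j j0)%bool then Ucheb i x * Ucheb j y else 0)).
    + rewrite SB_delta by auto. rewrite Hf. auto.
    + intros i j Hij'. rewrite SN_scal, DO by auto.
      rewrite (Nat.eqb_sym i0 i), (Nat.eqb_sym j0 j).
      destruct (Nat.eqb i i0 && Nat.eqb j j0)%bool; ring.
  - transitivity (sumMP n (fun _ _ => 0)). apply SN_ext. intros; ring. apply SN_zero.
  - rewrite <- IHHS1, <- IHHS2, <- SN_plus. apply SN_ext. intros; ring.
  - rewrite <- IHHS, <- SN_scal. apply SN_ext. intros; ring.
  - rewrite <- H, <- IHHS. apply SN_ext. intros; rewrite H; auto.
Qed.

Lemma sin2pos t : 0 < t < PI -> 0 < 1 - cos t ^ 2.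
Proof. intros H. assert (Hs := sin_gt_0 t (proj1 H) (proj2 H)).
  assert (E1 := sin2_cos2 t). unfold Rsqr in E1.
  replace (1 - cos t ^ 2) with (sin t * sin t) by (rewrite <- E1; ring).
  apply Rmult_lt_0_compat; auto. Qed.

Lemma angle p q : 0 < p -> p < q -> 0 < p * PI / q < PI.
Proof. intros H1 H2. assert (Hpi : 0 < PI) by apply PI_RGT_0. split.
  apply Rdiv_lt_0_compat; [apply Rmult_lt_0_compat|]; lra.
  apply (Rmult_lt_reg_r q). lra. unfold Rdiv. rewrite Rmult_assoc, Rinv_l by lra.
  rewrite Rmult_1_r, Rmult_comm. apply Rmult_lt_compat_l; lra. Qed.

Lemma Cn_pos n : 0 < Cn n.
Proof. unfold Cn. apply Rdiv_lt_0_compat. lra.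
  apply Rmult_lt_0_compat; apply INRpos; lia. Qed.

Lemma Wpos n (Hev : Nat.even n = true) m k : in_MP_range n m k -> 0 < W n m k.
Proof.
  intros [Hm Hk]. assert (Hn := n2 n Hev).
  assert (Hk2 : (2 * k <= n + 2)%nat) by lia.
  assert (Hmr : 0 < INR m) by (apply INRpos; lia).
  assert (Hm2 : INR m < INR (n+2)) by (apply lt_INR; lia).
  assert (Hkr : 1 <= INR k) by (apply (le_INR 1); lia).
  assert (Hk2r : INR (2*k) <= INR (n+2)) by (apply le_INR; lia).
  rewrite INR2k in Hk2r. rewrite plus_INR in Hk2r.
  assert (Hn3 : INR (n+3) = INR n + 3) by (rewrite plus_INR; simpl; ring).
  unfold W. apply Rmult_lt_0_compat. apply Rmult_lt_0_compat. apply Cn_pos.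
  - rewrite xMP_cos. apply sin2pos, angle; lra.
  - rewrite yMP_phi. apply sin2pos. unfold phi. destruct (Nat.odd m); apply angle; simpl in Hk2r; lra.
Qed.

Lemma SN_nonneg n F : (forall m k, in_MP_range n m k -> 0 <= F m k) -> 0 <= sumMP n F.
Proof. intros H. unfold sumMP. apply sNonneg. intros m Hm. apply sNonneg. intros k Hk.
  apply H. split; lia. Qed.

Lemma SN_nonneg_zero n F : (forall m k, in_MP_range n m k -> 0 <= F m k) -> sumMP n F = 0 ->
  forall m k, in_MP_range n m k -> F m k = 0.
Proof.
  intros H Hs m k [Hm Hk]. unfold sumMP in Hs.
  assert (H1 := sNonnegZero _ _ _ (fun l Hl => sNonneg _ 1 (n/2+1) (fun k Hk => H l k (conj Hl Hk))) Hs m Hm).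
  apply (sNonnegZero _ _ _ (fun k Hk => H m k (conj Hm Hk)) H1 k Hk).
Qed.

Definition KK n m k m' k' := Kn n (xMP n m) (yMP n m k) (xMP n m') (yMP n m' k').

Lemma P1 n (Hev : Nat.even n = true) m k m' k' :
  sumMP n (fun m2 k2 => W n m2 k2 * KK n m k m2 k2 * KK n m2 k2 m' k') = KK n m k m' k'.
Proof. unfold KK. apply (REP n Hev (fun x y => Kn n (xMP n m) (yMP n m k) x y)). apply Kn_BG. Qed.

Lemma TRACE n (Hev : Nat.even n = true) :
  sumMP n (fun m k => W n m k * KK n m k m k) = SB n (fun _ _ => 1).
Proof.
  rewrite (SN_ext _ _ (fun m k => SB n (fun i j => W n m k * (Ucheb i (xMP n m) * Ucheb j (yMP n m k)) * (Ucheb i (xMP n m) * Ucheb j (yMP n m k))))).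
  2:{ intros. unfold KK. rewrite Kn_SB, <- SB_scal. apply SB_ext. intros; ring. }
  rewrite <- SB_SN. apply SB_ext. intros i j Hij. rewrite DO by auto.
  rewrite !Nat.eqb_refl. auto.
Qed.

Lemma COUNT n (Hev : Nat.even n = true) : sumMP n (fun _ _ => 1) = SB n (fun _ _ => 1).
Proof.
  rewrite SN_count, SB_count. assert (Hn := n2 n Hev).
  replace (INR (n/2+1)) with ((INR n + 2)/2). rewrite !plus_INR. simpl. field.
  rewrite Hn at 1. rewrite plus_INR, mult_INR. simpl. field.
Qed.

Lemma KEY n (Hev : Nat.even n = true) m k m' k' :
  in_MP_range n m k -> in_MP_range n m' k' ->
  W n m k * KK n m k m' k' = if (Nat.eqb m m' && Nat.eqb k k')%bool then 1 else 0.
Proof.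
  intros Hs Ht.
  set (Ef := fun a b c d => if (Nat.eqb a c && Nat.eqb b d)%bool
      then (W n a b * KK n a b a b - 1)^2 else W n a b * W n c d * KK n a b c d ^ 2).
  assert (Hrow : forall a b, in_MP_range n a b ->
     sumMP n (fun c d => Ef a b c d) = 1 - W n a b * KK n a b a b).
  { intros m0 k0 H0.
    rewrite (SN_ext _ _ (fun c1 d1 => W n m0 k0 * (W n c1 d1 * KK n m0 k0 c1 d1 * KK n c1 d1 m0 k0) +
        (if (Nat.eqb m0 c1 && Nat.eqb k0 d1)%bool then
           (W n m0 k0 * KK n m0 k0 m0 k0 - 1)^2 - W n m0 k0 * W n c1 d1 * KK n m0 k0 c1 d1 ^ 2 else 0))).
    2:{ intros c1 d1 _. unfold Ef. cbv beta. assert (Hsy : KK n c1 d1 m0 k0 = KK n m0 k0 c1 d1) by (unfold KK; apply Kn_sym). rewrite Hsy.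
        destruct (Nat.eqb m0 c1 && Nat.eqb k0 d1)%bool; ring. }
    rewrite SN_plus, SN_scal, P1 by auto. rewrite SN_delta by auto. ring. }
  assert (Hnn : forall a b c d, in_MP_range n a b -> in_MP_range n c d -> 0 <= Ef a b c d).
  { intros m0 k0 m1 k1 H0 H1. unfold Ef. cbv beta. destruct (Nat.eqb m0 m1 && Nat.eqb k0 k1)%bool.
    apply pow2_ge_0. assert (A0 := Wpos n Hev m0 k0 H0). assert (A1 := Wpos n Hev m1 k1 H1).
    apply Rmult_le_pos. apply Rmult_le_pos; lra. apply pow2_ge_0. }
  assert (Htot : sumMP n (fun a b => sumMP n (fun c d => Ef a b c d)) = 0).
  { rewrite (SN_ext _ _ (fun a b => 1 + (-1) * (W n a b * KK n a b a b))).
    rewrite SN_plus, SN_scal, TRACE, COUNT by auto. ring.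
    intros. rewrite Hrow by auto. ring. }
  assert (Hr0 := SN_nonneg_zero n _ (fun a b H => SN_nonneg n _ (fun c d H' => Hnn a b c d H H')) Htot m k Hs).
  assert (He := SN_nonneg_zero n _ (fun c d H' => Hnn m k c d Hs H') Hr0 m' k' Ht).
  unfold Ef in He. cbv beta in He.
  destruct (Nat.eqb m m' && Nat.eqb k k')%bool eqn:Hb.
  - apply andb_prop in Hb as [H1 H2]. apply Nat.eqb_eq in H1, H2. subst m' k'. nra.
  - assert (A0 := Wpos n Hev m k Hs). assert (A1 := Wpos n Hev m' k' Ht).
    assert (Hq : KK n m k m' k' ^ 2 = 0).
    { apply (Rmult_eq_reg_l (W n m k * W n m' k')). lra. apply Rgt_not_eq. apply Rmult_lt_0_compat; lra. }
    assert (Hz : KK n m k m' k' = 0) by nra. rewrite Hz. ring.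
Qed.

Definition gg (j : nat) (y : R) : R := y ^ j * sqrt (1 - y ^ 2).

Lemma gg_cont j y : continuous (gg j) y.
Proof.
  unfold gg. apply (continuous_mult (fun y => y ^ j) (fun y => sqrt (1 - y^2))).
  apply (ex_derive_continuous (K:=R_AbsRing) (V:=R_NormedModule) (fun y => y ^ j)). auto_derive. auto.
  apply continuous_sqrt_comp.
  apply (ex_derive_continuous (K:=R_AbsRing) (V:=R_NormedModule) (fun y => 1 - y ^ 2)). auto_derive. auto.
Qed.

Lemma gg_ex j a b : ex_RInt (gg j) a b.
Proof. apply (ex_RInt_continuous (V:=R_CompleteNormedModule)). intros; apply gg_cont. Qed.

Lemma SUB j : RInt (gg j) (-1) 1 = RInt (hh j) 0 PI.
Proof.
  assert (Hpi : 0 < PI) by apply PI_RGT_0.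
  assert (Hc := RInt_comp (V:=R_CompleteNormedModule) (gg j) cos (fun t => - sin t) PI 0).
  rewrite cos_PI, cos_0 in Hc. rewrite <- Hc.
  - rewrite <- (opp_RInt_swap (V:=R_CompleteNormedModule)).
    + rewrite <- (RInt_opp (V:=R_CompleteNormedModule)).
      * apply RInt_ext. intros t Ht. rewrite Rmin_left, Rmax_right in Ht by lra.
        change (- (- sin t * gg j (cos t)) = hh j t). unfold gg, hh.
        assert (Hs : 0 < sin t) by (apply sin_gt_0; lra).
        assert (E1 := sin2_cos2 t). unfold Rsqr in E1.
        replace (1 - cos t ^ 2) with (sin t * sin t) by (rewrite <- E1; ring).
        rewrite sqrt_square by lra. ring.
      * apply (ex_RInt_continuous (V:=R_CompleteNormedModule)). intros z _.
        apply (continuous_scal (fun t => - sin t) (fun t => gg j (cos t))).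
        apply (ex_derive_continuous (K:=R_AbsRing) (V:=R_NormedModule) (fun t => - sin t)). auto_derive. auto.
        apply (continuous_comp cos (gg j)).
        apply (ex_derive_continuous (K:=R_AbsRing) (V:=R_NormedModule) cos). auto_derive. auto.
        apply gg_cont.
    + apply (ex_RInt_continuous (V:=R_CompleteNormedModule)). intros z _.
      apply (continuous_scal (fun t => - sin t) (fun t => gg j (cos t))).
      apply (ex_derive_continuous (K:=R_AbsRing) (V:=R_NormedModule) (fun t => - sin t)). auto_derive. auto.
      apply (continuous_comp cos (gg j)).
      apply (ex_derive_continuous (K:=R_AbsRing) (V:=R_NormedModule) cos). auto_derive. auto.
      apply gg_cont.
  - intros; apply gg_cont.
  - intros x _. split. auto_derive. auto. ring.
    apply (ex_derive_continuous (K:=R_AbsRing) (V:=R_NormedModule) (fun t => - sin t)). auto_derive. auto.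
Qed.

Lemma ex_RInt_sum (F : nat -> R -> R) a b p q :
  (forall l, ex_RInt (F l) a b) -> ex_RInt (fun y => sum_n_m (fun l => F l y) p q) a b.
Proof.
  intros H. induction q.
  - destruct p.
    + apply (ex_RInt_ext (F 0%nat)). intros; rewrite sum_n_n; auto. auto.
    + apply (ex_RInt_ext (fun _ => 0)). intros; rewrite sEmpty; auto; lia. apply ex_RInt_const.
  - destruct (Compare_dec.le_lt_dec p (S q)).
    + apply (ex_RInt_ext (fun y => plus (sum_n_m (fun l => F l y) p q) (F (S q) y))).
      intros; rewrite sSm by lia; auto. apply (ex_RInt_plus (V:=R_NormedModule)); auto.
    + apply (ex_RInt_ext (fun _ => 0)). intros; rewrite sEmpty; auto; lia. apply ex_RInt_const.
Qed.

Lemma RInt_sum (F : nat -> R -> R) a b p q :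
  (forall l, ex_RInt (F l) a b) ->
  RInt (fun y => sum_n_m (fun l => F l y) p q) a b =R sum_n_m (fun l => RInt (F l) a b) p q.
Proof.
  intros H. induction q.
  - destruct p.
    + rewrite sum_n_n. apply RInt_ext. intros; rewrite sum_n_n; auto.
    + rewrite sEmpty by lia. rewrite (RInt_ext _ (fun _ => 0)). rewrite RInt_const.
      unfold scal; simpl; unfold mult; simpl. ring.
      intros; rewrite sEmpty; auto; lia.
  - destruct (Compare_dec.le_lt_dec p (S q)).
    + rewrite sSm by lia.
      transitivity (RInt (fun y => sum_n_m (fun l => F l y) p q) a b + RInt (F (S q)) a b).
      * rewrite (RInt_ext _ (fun y => plus (sum_n_m (fun l => F l y) p q) (F (S q) y))).
        rewrite (RInt_plus (V:=R_CompleteNormedModule)). auto.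
        apply ex_RInt_sum; auto. auto.
        intros; rewrite sSm by lia; auto.
      * f_equal. exact IHq.
    + rewrite sEmpty by lia. rewrite (RInt_ext _ (fun _ => 0)). rewrite RInt_const.
      unfold scal; simpl; unfold mult; simpl. ring.
      intros; rewrite sEmpty; auto; lia.
Qed.

Lemma ex_RInt_SB n (F : nat -> nat -> R -> R) a b :
  (forall i j, ex_RInt (F i j) a b) -> ex_RInt (fun y => SB n (fun i j => F i j y)) a b.
Proof.
  intros H. unfold SB. apply (ex_RInt_sum (fun i y => sum_n_m (fun j => F i j y) 0 (n - i))).
  intros i. apply ex_RInt_sum. auto.
Qed.

Lemma RInt_SB n (F : nat -> nat -> R -> R) a b :
  (forall i j, ex_RInt (F i j) a b) ->
  RInt (fun y => SB n (fun i j => F i j y)) a b = SB n (fun i j => RInt (F i j) a b).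
Proof.
  intros H. unfold SB. rewrite (RInt_sum (fun i y => sum_n_m (fun j => F i j y) 0 (n - i))).
  apply sExt. intros. apply RInt_sum. auto.
  intros i. apply ex_RInt_sum. auto.
Qed.

Lemma RInt_scalR (f : R -> R) c a b : ex_RInt f a b -> RInt (fun y => c * f y) a b = c * RInt f a b.
Proof. intros H. apply (RInt_scal (V:=R_CompleteNormedModule) f a b c H). Qed.

Lemma ex_scal (f : R -> R) c a b : ex_RInt f a b -> ex_RInt (fun y => c * f y) a b.
Proof. intros H. apply (ex_RInt_scal (V:=R_NormedModule) f a b c H). Qed.

Lemma PART1 n (Hev : Nat.even n = true) (c : nat -> nat -> R) :
     4 / PI ^ 2 *
       RInt (fun x => RInt (fun y =>
         poly_eval (2 * n) c x y * sqrt (1 - x ^ 2) * sqrt (1 - y ^ 2)) (-1) 1) (-1) 1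
     = Cn n * sumMP n (fun m k =>
         (1 - xMP n m ^ 2) * (1 - yMP n m k ^ 2) * poly_eval (2 * n) c (xMP n m) (yMP n m k)).
Proof.
  rewrite (RInt_ext _ (fun x => SB (2*n) (fun i j => (c i j * RInt (gg j) (-1) 1) * gg i x))).
  2:{ intros x _.
      rewrite (RInt_ext _ (fun y => SB (2*n) (fun i j => (c i j * gg i x) * gg j y))).
      - rewrite RInt_SB. apply SB_ext. intros i j _. rewrite RInt_scalR. ring.
        apply gg_ex. intros; apply ex_scal, gg_ex.
      - intros y _. rewrite poly_eval_SB.
        transitivity ((sqrt (1 - x^2) * sqrt (1 - y^2)) * SB (2*n) (fun i j => c i j * x ^ i * y ^ j)).
        rg. rewrite <- SB_scal. apply SB_ext. intros. unfold gg. ring. }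
  rewrite RInt_SB by (intros; apply ex_scal, gg_ex).
  rewrite (SN_ext _ _ (fun m k => SB (2*n) (fun i j => c i j * ((1 - xMP n m ^ 2) * (1 - yMP n m k ^ 2) * (xMP n m ^ i * yMP n m k ^ j))))).
  2:{ intros. rewrite poly_eval_SB, <- SB_scal. apply SB_ext. intros; ring. }
  rewrite <- SB_SN, <- SB_scal, <- SB_scal. apply SB_ext. intros i j Hij.
  rewrite RInt_scalR by apply gg_ex. rewrite SN_scal.
  transitivity (c i j * (Cn n * sumMP n (fun m k => (1 - xMP n m ^ 2) * (1 - yMP n m k ^ 2) * (xMP n m ^ i * yMP n m k ^ j)))).
  rewrite (CUB n Hev) by lia. rewrite !SUB. ring. ring.
Qed.

Lemma Span2_SN G n (F : nat -> nat -> R -> R -> R) :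
  (forall m k, Span2 G (F m k)) -> Span2 G (fun x y => sumMP n (fun m k => F m k x y)).
Proof.
  intros H. unfold sumMP.
  apply (Span2_sum G (fun m x y => sum_n_m (fun k => F m k x y) 1 (n/2+1))).
  intros m _. apply (Span2_sum G (fun k x y => F m k x y)). intros; auto.
Qed.

Lemma omega_eq n (Hev : Nat.even n = true) m k : in_MP_range n m k ->
  omega n m k = Cn n * (1 - xMP n m ^ 2) * (1 - yMP n m k ^ 2).
Proof.
  intros Hs. assert (HK := KEY n Hev m k m k Hs Hs). rewrite !Nat.eqb_refl in HK. simpl in HK.
  assert (Ho : omega n m k = / KK n m k m k).
  { unfold omega. f_equal. unfold KK. rewrite Kn_SB. unfold SB. apply sExt. intros. apply sExt. intros. ring. }
  rewrite Ho. fold (W n m k).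
  assert (Hk : KK n m k m k <> 0). { intros Hz. rewrite Hz in HK. lra. }
  transitivity ((W n m k * KK n m k m k) * / KK n m k m k). rewrite HK. ring. field. auto.
Qed.

Lemma Ln_interp n (Hev : Nat.even n = true) f m' k' : in_MP_range n m' k' ->
  Ln n f (xMP n m') (yMP n m' k') = f (xMP n m') (yMP n m' k').
Proof.
  intros Ht. unfold Ln. rewrite <- SN_scal.
  rewrite (SN_ext _ _ (fun m k => if (Nat.eqb m' m && Nat.eqb k' k)%bool then f (xMP n m') (yMP n m' k') else 0)).
  apply SN_delta; auto.
  intros m k Hs. assert (HK := KEY n Hev m k m' k' Hs Ht). unfold KK, W in HK.
  rewrite (Nat.eqb_sym m' m), (Nat.eqb_sym k' k).
  destruct (Nat.eqb m m' && Nat.eqb k k')%bool eqn:Hb.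
  - apply andb_prop in Hb as [H1 H2]. apply Nat.eqb_eq in H1, H2. subst m' k'.
    transitivity (f (xMP n m) (yMP n m k) * (Cn n * (1 - xMP n m ^ 2) * (1 - yMP n m k ^ 2) *
       Kn n (xMP n m) (yMP n m k) (xMP n m) (yMP n m k))). ring. rewrite HK. ring.
  - transitivity (f (xMP n m) (yMP n m k) * (Cn n * (1 - xMP n m ^ 2) * (1 - yMP n m k ^ 2) *
       Kn n (xMP n m) (yMP n m k) (xMP n m') (yMP n m' k'))). ring. rewrite HK. ring.
Qed.

Lemma Ln_inP n f : inP n (Ln n f).
Proof.
  apply BG_inP. unfold Ln.
  apply (S2ext _ (fun x y => Cn n * sumMP n (fun m k =>
     ((1 - xMP n m ^ 2) * (1 - yMP n m k ^ 2) * f (xMP n m) (yMP n m k)) * Kn n (xMP n m) (yMP n m k) x y))).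
  2:{ intros; reflexivity. }
  apply S2scal. apply (Span2_SN _ n (fun m k x y => ((1 - xMP n m ^ 2) * (1 - yMP n m k ^ 2) * f (xMP n m) (yMP n m k)) * Kn n (xMP n m) (yMP n m k) x y)).
  intros m k. apply S2scal. apply Kn_BG.
Qed.

Theorem theorem4 (n : nat) (Hpos : (0 < n)%nat) (Heven : Nat.even n = true) :
  (* (i) cubature formula exact on P^2_{2n} *)
  (forall c : nat -> nat -> R,
     4 / PI ^ 2 *
       RInt (fun x => RInt (fun y =>
         poly_eval (2 * n) c x y * sqrt (1 - x ^ 2) * sqrt (1 - y ^ 2)) (-1) 1) (-1) 1
     = Cn n * sumMP n (fun m k =>
         (1 - xMP n m ^ 2) * (1 - yMP n m k ^ 2) * poly_eval (2 * n) c (xMP n m) (yMP n m k)))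
  /\
  (* (ii) the weights *)
  (forall m k, in_MP_range n m k ->
     omega n m k = Cn n * (1 - xMP n m ^ 2) * (1 - yMP n m k ^ 2))
  /\
  (* (iii) L_n f is the (_,_)_* projection onto P^2_n and interpolates at MP_n *)
  (forall f : R -> R -> R, contQ f ->
     inP n (Ln n f)
     /\ (forall q, inP n q -> dinner n (fun x y => f x y - Ln n f x y) q = 0)
     /\ (forall m k, in_MP_range n m k ->
           Ln n f (xMP n m) (yMP n m k) = f (xMP n m) (yMP n m k)))
  /\
  (* (iv) Lebesgue function *)
  ((exists l, is_lagrange n l) /\
   forall l, is_lagrange n l -> forall x y, inQ x y ->
     lebesgue_fun n l x y =
       Cn n * sumMP n (fun m k =>
         (1 - xMP n m ^ 2) * (1 - yMP n m k ^ 2)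
         * Rabs (Kn n (xMP n m) (yMP n m k) x y))).
Proof.
  split; [|split; [|split]].
  - intros c. apply PART1; auto.
  - intros m k Hs. apply omega_eq; auto.
  - intros f _. split; [|split].
    + apply Ln_inP.
    + intros q _. unfold dinner.
      rewrite (SN_ext _ _ (fun _ _ => 0)). rewrite SN_zero. ring.
      intros m k Hs. rewrite Ln_interp by auto. ring.
    + intros m k Hs. apply Ln_interp; auto.
  - split.
    + exists (fun m k x y => W n m k * Kn n (xMP n m) (yMP n m k) x y).
      intros m k Hs. split.
      * apply BG_inP. apply S2scal. apply Kn_BG.
      * intros m' k' Ht. apply (KEY n Heven); auto.
    + intros l Hl x y _. unfold lebesgue_fun.
      assert (Hval : forall m k, in_MP_range n m k -> l m k x y = W n m k * Kn n (xMP n m) (yMP n m k) x y).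
      { intros m k Hs. destruct (Hl m k Hs) as [HP Hv].
        rewrite <- (REP n Heven (l m k) (inP_BG n _ HP) x y).
        rewrite (SN_ext _ _ (fun m' k' => if (Nat.eqb m m' && Nat.eqb k k')%bool then
             W n m' k' * Kn n (xMP n m') (yMP n m' k') x y else 0)).
        apply SN_delta; auto.
        intros m' k' Ht. rewrite Hv by auto. destruct (Nat.eqb m m' && Nat.eqb k k')%bool; ring. }
      rewrite <- SN_scal. apply SN_ext. intros m k Hs. rewrite Hval by auto.
      rewrite Rabs_mult, (Rabs_pos_eq (W n m k)). unfold W. ring.
      apply Rlt_le, Wpos; auto.
Qed.
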